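(* Work in $\mathsf{ZF}$. For every (definable) proper class $\mathcal{C}$ and every non-zero ordinal $\alpha$, there is a surjection from $\mathcal{C}$ onto $\alpha$. *)

(* Defs.v *)
(* A deep embedding of first-order set theory (language {∈, =})
   with Tarskian semantics in arbitrary (normal) models of ZF.
   "ZF proves the schema" is rendered semantically (via completeness): for every
   formula phi defining C, there is a formula psi (uniform in phi, independent of
   the model) that defines, in every model of ZF, a surjection from C onto alpha. *)

Inductive form : Type :=
| FMem : nat -> nat -> form
| FEq  : nat -> nat -> form
| FFal : form
| FImp : form -> form -> form
| FAnd : form -> form -> form
| FOr  : form -> form -> form
| FAll : form -> form              (* binds de Bruijn index 0 *)
| FEx  : form -> form.

Definition scons {M : Type} (x : M) (rho : nat -> M) : nat -> M :=
  fun n => match n with 0 => x | S k => rho k end.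

Fixpoint sat {M : Type} (E : M -> M -> Prop) (rho : nat -> M) (p : form) : Prop :=
  match p with
  | FMem i j => E (rho i) (rho j)
  | FEq i j => rho i = rho j
  | FFal => False
  | FImp p q => sat E rho p -> sat E rho q
  | FAnd p q => sat E rho p /\ sat E rho q
  | FOr p q => sat E rho p \/ sat E rho q
  | FAll p => forall x : M, sat E (scons x rho) p
  | FEx p => exists x : M, sat E (scons x rho) p
  end.

(* (M, E) is a model of ZF (first-order: the schemas range over formulas with parameters). *)
Record ZF_model (M : Type) (E : M -> M -> Prop) : Prop := {
  zf_ext : forall a b, (forall z, E z a <-> E z b) -> a = b;
  zf_found : forall a, (exists z, E z a) -> exists y, E y a /\ ~ (exists z, E z y /\ E z a);
  zf_pair : forall a b, exists c, E a c /\ E b c;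
  zf_union : forall a, exists u, forall y z, E z y -> E y a -> E z u;
  zf_power : forall a, exists p, forall y, (forall z, E z y -> E z a) -> E y p;
  zf_inf : exists w, (exists e, E e w /\ forall z, ~ E z e) /\
             forall y, E y w -> exists s, E s w /\ forall z, E z s <-> (E z y \/ z = y);
  zf_sep : forall (phi : form) (rho : nat -> M) a,
             exists b, forall x, E x b <-> (E x a /\ sat E (scons x rho) phi);
  zf_repl : forall (phi : form) (rho : nat -> M) a,
             (forall x, E x a -> exists y, sat E (scons y (scons x rho)) phi /\
                 forall y', sat E (scons y' (scons x rho)) phi -> y' = y) ->
             exists b, forall x, E x a -> exists y, E y b /\ sat E (scons y (scons x rho)) phi
}.

Definition proper_class {M : Type} (E : M -> M -> Prop) (phi : form) (rho : nat -> M) : Prop :=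
  ~ (exists b, forall x, E x b <-> sat E (scons x rho) phi).

(* von Neumann ordinal: transitive set, linearly ordered by ∈ (well-foundedness from Foundation). *)
Definition is_ordinal {M : Type} (E : M -> M -> Prop) (a : M) : Prop :=
  (forall y z, E z y -> E y a -> E z a) /\
  (forall y z, E y a -> E z a -> E y z \/ y = z \/ E z y).

Definition class_surjection {M : Type} (E : M -> M -> Prop) (phi psi : form)
    (rho : nat -> M) (alpha : M) : Prop :=
  let C x := sat E (scons x rho) phi in
  let F x y := sat E (scons y (scons x (scons alpha rho))) psi in
  (forall x y, F x y -> C x /\ E y alpha) /\
  (forall x, C x -> exists y, F x y) /\
  (forall x y y', F x y -> F x y' -> y = y') /\
  (forall b, E b alpha -> exists x, C x /\ F x b).

(* Main.v *)
Require Import Defs.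
From Stdlib Require Import Classical.

Definition upr (s : nat -> nat) : nat -> nat :=
  fun n => match n with 0 => 0 | S k => S (s k) end.

Fixpoint ren (s : nat -> nat) (p : form) : form :=
  match p with
  | FMem i j => FMem (s i) (s j)
  | FEq i j => FEq (s i) (s j)
  | FFal => FFal
  | FImp p q => FImp (ren s p) (ren s q)
  | FAnd p q => FAnd (ren s p) (ren s q)
  | FOr p q => FOr (ren s p) (ren s q)
  | FAll p => FAll (ren (upr s) p)
  | FEx p => FEx (ren (upr s) p)
  end.

Lemma sat_ext {M} (E : M -> M -> Prop) p : forall r1 r2, (forall n, r1 n = r2 n) ->
  (sat E r1 p <-> sat E r2 p).
Proof.
  induction p; intros r1 r2 H; simpl.
  - rewrite !H; tauto.
  - rewrite !H; tauto.
  - tauto.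
  - rewrite (IHp1 r1 r2 H), (IHp2 r1 r2 H); tauto.
  - rewrite (IHp1 r1 r2 H), (IHp2 r1 r2 H); tauto.
  - rewrite (IHp1 r1 r2 H), (IHp2 r1 r2 H); tauto.
  - split; intros A x; [rewrite <- (IHp (scons x r1) (scons x r2)) | rewrite (IHp (scons x r1) (scons x r2))]; auto;
    intros [|n]; simpl; auto.
  - split; intros [x A]; exists x; [rewrite <- (IHp (scons x r1) (scons x r2)) | rewrite (IHp (scons x r1) (scons x r2))]; auto;
    intros [|n]; simpl; auto.
Qed.

Lemma sat_ren {M} (E : M -> M -> Prop) p : forall s r,
  sat E r (ren s p) <-> sat E (fun n => r (s n)) p.
Proof.
  induction p; intros s r; simpl.
  - tauto.
  - tauto.
  - tauto.
  - rewrite IHp1, IHp2; tauto.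
  - rewrite IHp1, IHp2; tauto.
  - rewrite IHp1, IHp2; tauto.
  - assert (Hx : forall x, sat E (scons x r) (ren (upr s) p) <-> sat E (scons x (fun n => r (s n))) p).
    { intros x. rewrite IHp. apply sat_ext. intros [|n]; reflexivity. }
    split; intros A x; apply Hx; auto; apply Hx; auto.
  - assert (Hx : forall x, sat E (scons x r) (ren (upr s) p) <-> sat E (scons x (fun n => r (s n))) p).
    { intros x. rewrite IHp. apply sat_ext. intros [|n]; reflexivity. }
    split; intros [x A]; exists x; apply Hx; auto.
Qed.

Definition UD (P : forall M : Type, (M -> M -> Prop) -> (nat -> M) -> Prop) : Prop :=
  exists p, forall M E r, sat E r p <-> P M E r.

Lemma UD_mem i j : UD (fun M E r => E (r i) (r j)).
Proof. exists (FMem i j); intros; simpl; tauto. Qed.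
Lemma UD_eq i j : UD (fun M E r => r i = r j).
Proof. exists (FEq i j); intros; simpl; tauto. Qed.
Lemma UD_False : UD (fun M E r => False).
Proof. exists FFal; intros; simpl; tauto. Qed.
Lemma UD_True : UD (fun M E r => True).
Proof. exists (FImp FFal FFal); intros; simpl; tauto. Qed.
Lemma UD_imp P Q : UD P -> UD Q -> UD (fun M E r => P M E r -> Q M E r).
Proof. intros [p Hp] [q Hq]; exists (FImp p q); intros; simpl; rewrite Hp, Hq; tauto. Qed.
Lemma UD_not P : UD P -> UD (fun M E r => ~ P M E r).
Proof. intros [p Hp]; exists (FImp p FFal); intros; simpl; rewrite Hp; tauto. Qed.
Lemma UD_and P Q : UD P -> UD Q -> UD (fun M E r => P M E r /\ Q M E r).
Proof. intros [p Hp] [q Hq]; exists (FAnd p q); intros; simpl; rewrite Hp, Hq; tauto. Qed.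
Lemma UD_or P Q : UD P -> UD Q -> UD (fun M E r => P M E r \/ Q M E r).
Proof. intros [p Hp] [q Hq]; exists (FOr p q); intros; simpl; rewrite Hp, Hq; tauto. Qed.
Lemma UD_iff P Q : UD P -> UD Q -> UD (fun M E r => P M E r <-> Q M E r).
Proof. intros [p Hp] [q Hq]; exists (FAnd (FImp p q) (FImp q p)); intros; simpl; rewrite Hp, Hq; tauto. Qed.
Lemma UD_all (P : forall M : Type, (M -> M -> Prop) -> M -> (nat -> M) -> Prop) :
  UD (fun M E r => P M E (r 0) (fun n => r (S n))) -> UD (fun M E r => forall x : M, P M E x r).
Proof. intros [p Hp]; exists (FAll p); intros; simpl. split; intros A x; specialize (A x); apply Hp in A || apply Hp; exact A. Qed.
Lemma UD_ex (P : forall M : Type, (M -> M -> Prop) -> M -> (nat -> M) -> Prop) :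
  UD (fun M E r => P M E (r 0) (fun n => r (S n))) -> UD (fun M E r => exists x : M, P M E x r).
Proof. intros [p Hp]; exists (FEx p); intros; simpl. split; intros [x A]; exists x; apply Hp in A || apply Hp; exact A. Qed.
Lemma UD_ren P : UD P -> forall s, UD (fun M E r => P M E (fun n => r (s n))).
Proof. intros [p Hp] s; exists (ren s p); intros; rewrite sat_ren; apply Hp. Qed.
Lemma UD_sat p : forall s, UD (fun M E r => sat E (fun n => r (s n)) p).
Proof. intros s; exists (ren s p); intros; rewrite sat_ren; tauto. Qed.

Create HintDb ud discriminated.
Ltac ud_base := first [ apply UD_not | apply UD_and | apply UD_or | apply UD_iff
  | apply UD_imp | apply UD_all | apply UD_ex | apply UD_mem | apply UD_eq
  | apply UD_True | apply UD_False ].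
Ltac ud := repeat (cbv beta; first [ solve [eauto with ud] | ud_base ]).

Goal UD (fun M E r => forall x : M, E x (r 0) -> exists y, E y x /\ ~ (y = r 1)).
Proof. ud. Qed.

Definition Sub {M} (E : M -> M -> Prop) a b := forall z, E z a -> E z b.
Definition Emp {M} (E : M -> M -> Prop) a := forall z, ~ E z a.
Definition Sing {M} (E : M -> M -> Prop) s a := forall z, E z s <-> z = a.
Definition Upair {M} (E : M -> M -> Prop) c a b := forall z, E z c <-> z = a \/ z = b.
Definition OP {M} (E : M -> M -> Prop) p a b := forall z, E z p <-> (Sing E z a \/ Upair E z a b).
Definition App {M} (E : M -> M -> Prop) f a v := exists p, E p f /\ OP E p a v.
Definition Succ {M} (E : M -> M -> Prop) s a := forall z, E z s <-> E z a \/ z = a.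
Definition Trans {M} (E : M -> M -> Prop) a := forall y z, E z y -> E y a -> E z a.
Definition Ord {M} (E : M -> M -> Prop) a := is_ordinal E a.
Definition Uni {M} (E : M -> M -> Prop) u a := forall z, E z u <-> exists y, E z y /\ E y a.

Lemma UD_Sub i j : UD (fun M E r => Sub E (r i) (r j)). Proof. unfold Sub; ud. Qed.
Lemma UD_Emp i : UD (fun M E r => Emp E (r i)). Proof. unfold Emp; ud. Qed.
Lemma UD_Sing i j : UD (fun M E r => Sing E (r i) (r j)). Proof. unfold Sing; ud. Qed.
Lemma UD_Upair i j k : UD (fun M E r => Upair E (r i) (r j) (r k)). Proof. unfold Upair; ud. Qed.
Hint Resolve UD_Sub UD_Emp UD_Sing UD_Upair : ud.
Lemma UD_OP i j k : UD (fun M E r => OP E (r i) (r j) (r k)). Proof. unfold OP; ud. Qed.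
Hint Resolve UD_OP : ud.
Lemma UD_App i j k : UD (fun M E r => App E (r i) (r j) (r k)). Proof. unfold App; ud. Qed.
Lemma UD_Succ i j : UD (fun M E r => Succ E (r i) (r j)). Proof. unfold Succ; ud. Qed.
Lemma UD_Trans i : UD (fun M E r => Trans E (r i)). Proof. unfold Trans; ud. Qed.
Lemma UD_Ord i : UD (fun M E r => Ord E (r i)). Proof. unfold Ord, is_ordinal; ud. Qed.
Lemma UD_Uni i j : UD (fun M E r => Uni E (r i) (r j)). Proof. unfold Uni; ud. Qed.
Hint Resolve UD_App UD_Succ UD_Trans UD_Ord UD_Uni : ud.

Lemma sepU (P : forall M : Type, (M -> M -> Prop) -> M -> (nat -> M) -> Prop) :
  UD (fun M E r => P M E (r 0) (fun n => r (S n))) ->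
  forall M E, ZF_model M E -> forall rho a, exists b, forall x, E x b <-> E x a /\ P M E x rho.
Proof.
  intros [p Hp] M E HZ rho a. destruct (zf_sep M E HZ p rho a) as [b Hb].
  exists b; intros x. rewrite Hb, Hp. tauto.
Qed.

Lemma replU (P : forall M : Type, (M -> M -> Prop) -> M -> M -> (nat -> M) -> Prop) :
  UD (fun M E r => P M E (r 1) (r 0) (fun n => r (S (S n)))) ->
  forall M E, ZF_model M E -> forall rho a,
  (forall x, E x a -> exists y, P M E x y rho /\ forall y', P M E x y' rho -> y' = y) ->
  exists b, forall x, E x a -> exists y, E y b /\ P M E x y rho.
Proof.
  intros [p Hp] M E HZ rho a Hf. destruct (zf_repl M E HZ p rho a) as [b Hb].
  - intros x Hx. destruct (Hf x Hx) as [y [Hy1 Hy2]]. exists y; split.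
    + apply Hp; exact Hy1.
    + intros y' Hy'. apply Hy2. apply Hp in Hy'. exact Hy'.
  - exists b; intros x Hx. destruct (Hb x Hx) as [y [Hy1 Hy2]]. exists y; split; auto.
    apply Hp in Hy2; exact Hy2.
Qed.

Section Model.
Variable M : Type.
Variable E : M -> M -> Prop.
Hypothesis HZ : ZF_model M E.
Local Notation "x ∈ y" := (E x y) (at level 70).

Lemma ext a b : (forall z, z ∈ a <-> z ∈ b) -> a = b.
Proof. apply (zf_ext M E HZ). Qed.

Lemma emp_ex : exists e, Emp E e.
Proof. destruct (zf_inf M E HZ) as [w [[e [_ He]] _]]. exists e; exact He. Qed.

Lemma emp_uniq a b : Emp E a -> Emp E b -> a = b.
Proof. intros A B; apply ext; intros z; split; intros C; [destruct (A z C)|destruct (B z C)]. Qed.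

Lemma upair_ex a b : exists c, Upair E c a b.
Proof.
  destruct (zf_pair M E HZ a b) as [c [Ha Hb]].
  destruct (sepU (fun M E x r => x = r 0 \/ x = r 1) ltac:(ud) M E HZ (scons a (scons b (fun _ => a))) c) as [d Hd].
  exists d; intros z; rewrite Hd; simpl. split; [tauto|]. intros [->| ->]; auto.
Qed.

Lemma sing_ex a : exists s, Sing E s a.
Proof. destruct (upair_ex a a) as [c Hc]; exists c; intros z; rewrite (Hc z); tauto. Qed.

Lemma uni_ex a : exists u, Uni E u a.
Proof.
  destruct (zf_union M E HZ a) as [u Hu].
  destruct (sepU (fun M E x r => exists y, E x y /\ E y (r 0)) ltac:(ud) M E HZ (fun _ => a) u) as [d Hd].
  exists d; intros z; rewrite Hd. split; [tauto|]. intros [y [A B]]; split; eauto.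
Qed.

Lemma pow_ex a : exists p, forall y, y ∈ p <-> Sub E y a.
Proof.
  destruct (zf_power M E HZ a) as [p Hp].
  destruct (sepU (fun M E x r => Sub E x (r 0)) ltac:(ud) M E HZ (fun _ => a) p) as [d Hd].
  exists d; intros z; rewrite Hd. split; [tauto|]. intros A; split; auto.
Qed.

Lemma bunion_ex a b : exists c, forall z, z ∈ c <-> z ∈ a \/ z ∈ b.
Proof.
  destruct (upair_ex a b) as [p Hp]. destruct (uni_ex p) as [u Hu].
  exists u; intros z; rewrite (Hu z). split.
  - intros [y [A B]]; apply Hp in B as [->| ->]; auto.
  - intros [A|A]; [exists a|exists b]; rewrite (Hp _); auto.
Qed.

Lemma succ_ex a : exists s, Succ E s a.
Proof.
  destruct (sing_ex a) as [s Hs]. destruct (bunion_ex a s) as [c Hc].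
  exists c; intros z; rewrite (Hc z), (Hs z); tauto.
Qed.

Lemma op_ex a b : exists p, OP E p a b.
Proof.
  destruct (sing_ex a) as [s Hs]. destruct (upair_ex a b) as [c Hc].
  destruct (upair_ex s c) as [p Hp]. exists p. intros z; rewrite (Hp z). split.
  - intros [->| ->]; auto.
  - intros [A|A]; [left|right]; apply ext; intros w; [rewrite (A w), (Hs w)|rewrite (A w), (Hc w)]; tauto.
Qed.

Lemma sing_eq s a s' a' : Sing E s a -> Sing E s' a' -> (s = s' <-> a = a').
Proof.
  intros A B; split.
  - intros ->. apply B, A; reflexivity.
  - intros ->. apply ext; intros z; rewrite (A z), (B z); tauto.
Qed.

Lemma op_inj p a b c d : OP E p a b -> OP E p c d -> a = c /\ b = d.
Proof.
  intros P1 P2.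
  destruct (sing_ex a) as [sa Hsa]. destruct (upair_ex a b) as [pab Hpab].
  destruct (sing_ex c) as [sc Hsc]. destruct (upair_ex c d) as [pcd Hpcd].
  assert (Ia : sa ∈ p) by (apply P1; auto).
  assert (Iab : pab ∈ p) by (apply P1; auto).
  assert (Ic : sc ∈ p) by (apply P2; auto).
  assert (Icd : pcd ∈ p) by (apply P2; auto).
  assert (ac : a = c).
  { apply P2 in Ia as [A|A].
    - apply A, Hsa; reflexivity.
    - assert (c ∈ sa) by (apply A; auto). apply Hsa in H; auto. }
  subst c. split; auto.
  apply P2 in Iab as [A|A].
  -
    assert (ba : b = a) by (apply A, Hpab; auto). subst b.
    apply P1 in Icd as [B|B].
    + symmetry; apply B, Hpcd; auto.
    + assert (d = a \/ d = a) by (apply B, Hpcd; auto). destruct H; auto.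
  - assert (b = a \/ b = d) by (apply A, Hpab; auto).
    destruct H as [->| ->]; auto.
    apply P1 in Icd as [B|B].
    + symmetry; apply B, Hpcd; auto.
    + assert (d = a \/ d = a) by (apply B, Hpcd; auto). destruct H; auto.
Qed.

End Model.

Section Model.
Variable M : Type.
Variable E : M -> M -> Prop.
Hypothesis HZ : ZF_model M E.
Local Notation "x ∈ y" := (E x y) (at level 70).

Lemma found_min a : (exists z, z ∈ a) -> exists y, y ∈ a /\ forall z, z ∈ y -> ~ z ∈ a.
Proof. intros A. destruct (zf_found M E HZ a A) as [y [B C]]. exists y; split; auto.
  intros z D F; apply C; eauto. Qed.

Lemma no_self x : ~ x ∈ x.
Proof. intros A. destruct (sing_ex M E HZ x) as [s Hs].
  destruct (found_min s) as [y [B C]]. { exists x; apply Hs; auto. }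
  apply Hs in B; subst y. apply (C x A). apply Hs; auto. Qed.

Lemma no_2cycle x y : x ∈ y -> y ∈ x -> False.
Proof. intros A B. destruct (upair_ex M E HZ x y) as [s Hs].
  destruct (found_min s) as [w [C D]]. { exists x; apply Hs; auto. }
  apply Hs in C as [->| ->].
  - apply (D y B). apply Hs; auto.
  - apply (D x A). apply Hs; auto. Qed.

Lemma no_3cycle x y z : x ∈ y -> y ∈ z -> z ∈ x -> False.
Proof. intros A B C. destruct (upair_ex M E HZ x y) as [s Hs].
  destruct (sing_ex M E HZ z) as [t Ht]. destruct (bunion_ex M E HZ s t) as [u Hu].
  assert (Hu' : forall w, w ∈ u <-> w = x \/ w = y \/ w = z).
  { intros w; rewrite (Hu w), (Hs w), (Ht w); tauto. }
  destruct (found_min u) as [w [D F]]. { exists x; apply Hu'; auto. }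
  apply Hu' in D as [->|[->| ->]].
  - apply (F z C). apply Hu'; auto.
  - apply (F x A). apply Hu'; auto.
  - apply (F y B). apply Hu'; auto. Qed.

Lemma ord_trans a : Ord E a -> forall y z, z ∈ y -> y ∈ a -> z ∈ a.
Proof. intros [A _]; exact A. Qed.

Lemma ord_tri_in a : Ord E a -> forall y z, y ∈ a -> z ∈ a -> y ∈ z \/ y = z \/ z ∈ y.
Proof. intros [_ A]; exact A. Qed.

Lemma ord_elem a y : Ord E a -> y ∈ a -> Ord E y.
Proof.
  intros Ha Hy. split.
  - intros w z A B. assert (Hw : w ∈ a) by (eapply ord_trans; eauto).
    assert (Hz : z ∈ a) by (eapply ord_trans; eauto).
    destruct (ord_tri_in a Ha z y Hz Hy) as [C|[C|C]]; auto.
    + subst z. exfalso; exact (no_2cycle y w A B).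
    + exfalso; exact (no_3cycle y z w C A B).
  - intros w z A B. apply (ord_tri_in a Ha); eapply ord_trans; eauto.
Qed.

Lemma ord_emp e : Emp E e -> Ord E e.
Proof. intros A; split; intros y z B C; destruct (A _ C). Qed.

Lemma ord_succ a s : Ord E a -> Succ E s a -> Ord E s.
Proof.
  intros Ha Hs. split.
  - intros y z A B. apply Hs in B as [B| ->]; apply Hs; left; auto. eapply ord_trans; eauto.
  - intros y z A B. apply Hs in A as [A| ->]; apply Hs in B as [B| ->]; auto.
    apply (ord_tri_in a Ha); auto.
Qed.

Lemma ord_sub_eq c a : Ord E c -> Ord E a -> Sub E c a -> c = a \/ c ∈ a.
Proof.
  intros Hc Ha S.
  destruct (sepU (fun M E x r => ~ E x (r 0)) ltac:(ud) M E HZ (fun _ => c) a) as [D HD]; simpl in HD.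
  destruct (classic (exists z, z ∈ D)) as [[z Hz]|N].
  - right. destruct (found_min D) as [d [Hd1 Hd2]]; eauto.
    apply HD in Hd1 as [Hd1 Hd3].
    replace c with d; auto. apply (ext M E HZ); auto. intros w; split; intros W.
    + destruct (classic (w ∈ c)) as [?|Nw]; auto. exfalso; apply (Hd2 w W). apply HD; split; auto.
      eapply ord_trans; eauto.
    + assert (w ∈ a) by auto. destruct (ord_tri_in a Ha w d H Hd1) as [X|[X|X]]; auto.
      * subst; contradiction.
      * exfalso; apply Hd3. eapply ord_trans; eauto.
  - left. apply (ext M E HZ); auto. intros w; split; auto. intros W. apply NNPP; intros Nw. apply N. exists w. apply HD; auto.
Qed.

Lemma ord_tri a b : Ord E a -> Ord E b -> a ∈ b \/ a = b \/ b ∈ a.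
Proof.
  intros Ha Hb.
  destruct (sepU (fun M E x r => E x (r 0)) ltac:(ud) M E HZ (fun _ => b) a) as [c Hc]; simpl in Hc.
  assert (Oc : Ord E c).
  { split.
    - intros y z A B. apply Hc in B as [B1 B2]. apply Hc; split; eapply ord_trans; eauto.
    - intros y z A B. apply Hc in A; apply Hc in B. apply (ord_tri_in a Ha); tauto. }
  destruct (ord_sub_eq c a Oc Ha) as [Ca|Ca]. { intros z Z; apply Hc in Z; tauto. }
  - destruct (ord_sub_eq c b Oc Hb) as [Cb|Cb]. { intros z Z; apply Hc in Z; tauto. }
    + subst. auto.
    + subst. auto.
  - destruct (ord_sub_eq c b Oc Hb) as [Cb|Cb]. { intros z Z; apply Hc in Z; tauto. }
    + subst. auto.
    + exfalso. apply (no_self c). apply Hc; auto.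
Qed.

Lemma ord_sub_iff a b : Ord E a -> Ord E b -> (Sub E a b <-> a ∈ b \/ a = b).
Proof.
  intros Ha Hb; split.
  - intros S. destruct (ord_sub_eq a b Ha Hb S); auto.
  - intros [A| ->]; intros z Z; auto. eapply ord_trans; eauto.
Qed.

Lemma ord_of_trans a : Trans E a -> (forall y, y ∈ a -> Ord E y) -> Ord E a.
Proof. intros T O. split; auto. intros y z A B. apply ord_tri; auto. Qed.

Lemma ord_uni a u : (forall y, y ∈ a -> Ord E y) -> Uni E u a -> Ord E u.
Proof.
  intros O U. apply ord_of_trans.
  - intros y z A B. apply U in B as [w [B C]]. apply U. exists w; split; auto.
    eapply ord_trans; eauto.
  - intros y A. apply U in A as [w [A B]]. eapply ord_elem; eauto.
Qed.

Lemma ord_ind (P : forall M : Type, (M -> M -> Prop) -> M -> (nat -> M) -> Prop) :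
  UD (fun M E r => P M E (r 0) (fun n => r (S n))) -> forall rho,
  (forall g, Ord E g -> (forall d, d ∈ g -> P M E d rho) -> P M E g rho) ->
  forall g, Ord E g -> P M E g rho.
Proof.
  intros HP rho IH g Hg. apply NNPP; intros N.
  destruct (succ_ex M E HZ g) as [s Hs]. assert (Os : Ord E s) by (eapply ord_succ; eauto).
  destruct (sepU (fun M E x r => ~ P M E x r) ltac:(ud) M E HZ rho s) as [D HD].
  destruct (found_min D) as [d [Hd1 Hd2]]. { exists g; apply HD; split; auto. apply Hs; auto. }
  apply HD in Hd1 as [Hd1 Hd3]. apply Hd3. apply IH. { eapply ord_elem; eauto. }
  intros z Z. apply NNPP; intros Nz. apply (Hd2 z Z). apply HD; split; auto. eapply ord_trans; eauto.
Qed.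

Lemma ord_min (P : forall M : Type, (M -> M -> Prop) -> M -> (nat -> M) -> Prop) :
  UD (fun M E r => P M E (r 0) (fun n => r (S n))) -> forall rho g,
  Ord E g -> P M E g rho -> exists m, Ord E m /\ P M E m rho /\ forall d, d ∈ m -> ~ P M E d rho.
Proof.
  intros HP rho g Hg Pg. apply NNPP; intros N.
  assert (forall g, Ord E g -> ~ P M E g rho).
  { apply (ord_ind (fun M E x r => ~ P M E x r) ltac:(ud)).
    intros h Hh IH Ph. apply N. exists h; auto. }
  eapply H; eauto.
Qed.

End Model.

Section Rec.
Variable G : forall M : Type, (M -> M -> Prop) -> M -> M -> M -> (nat -> M) -> Prop.

Definition Step {M} (E : M -> M -> Prop) (rho : nat -> M) f d v :=
  forall z, E z v <-> exists c, E c d /\ exists u w, App E f c u /\ G M E c u w rho /\ E z w.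
Definition RecFun {M} (E : M -> M -> Prop) (rho : nat -> M) f g :=
  Ord E g /\ (forall a, E a g -> exists v, App E f a v) /\
  (forall a v v', App E f a v -> App E f a v' -> v = v') /\
  (forall a v, App E f a v -> Step E rho f a v).
Definition FR {M} (E : M -> M -> Prop) (rho : nat -> M) g v :=
  exists f g', RecFun E rho f g' /\ Sub E g g' /\ Step E rho f g v.

Hypothesis HG : UD (fun M E r => G M E (r 0) (r 1) (r 2) (fun n => r (S (S (S n))))).

Lemma UD_G i j k s : UD (fun M E r => G M E (r i) (r j) (r k) (fun n => r (s n))).
Proof. exact (UD_ren _ HG (scons i (scons j (scons k s)))). Qed.
#[local] Hint Resolve UD_G : ud.
Lemma UD_Step s i j k : UD (fun M E r => Step E (fun n => r (s n)) (r i) (r j) (r k)).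
Proof. unfold Step; ud. Qed.
#[local] Hint Resolve UD_Step : ud.
Lemma UD_RecFun s i j : UD (fun M E r => RecFun E (fun n => r (s n)) (r i) (r j)).
Proof. unfold RecFun; ud. Qed.
#[local] Hint Resolve UD_RecFun : ud.
Lemma UD_FR s i j : UD (fun M E r => FR E (fun n => r (s n)) (r i) (r j)).
Proof. unfold FR; ud. Qed.

Section Model.
Variable M : Type.
Variable E : M -> M -> Prop.
Hypothesis HZ : ZF_model M E.
Variable rho : nat -> M.
Hypothesis Gtot : forall d u, exists w, G M E d u w rho.
Hypothesis Guniq : forall d u w w', G M E d u w rho -> G M E d u w' rho -> w = w'.
Local Notation "x ∈ y" := (E x y) (at level 70).

Lemma Step_transfer f f' d v : (forall c u, c ∈ d -> (App E f c u <-> App E f' c u)) ->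
  Step E rho f d v -> Step E rho f' d v.
Proof.
  intros A S z. rewrite (S z). split; intros [c [C [u [w [D F]]]]]; exists c; split; auto;
  exists u, w; split; auto; apply A; auto.
Qed.

Lemma Step_eq f f' d v v' :
  (forall c u u', c ∈ d -> App E f c u -> App E f' c u' -> u = u') ->
  (forall c, c ∈ d -> exists u, App E f c u) -> (forall c, c ∈ d -> exists u, App E f' c u) ->
  Step E rho f d v -> Step E rho f' d v' -> v = v'.
Proof.
  intros A T1 T2 S1 S2. apply (ext M E HZ). intros z. rewrite (S1 z), (S2 z). split.
  - intros [c [C [u [w [D [F K]]]]]]. destruct (T2 c C) as [u' D'].
    exists c; split; auto. exists u', w. assert (u = u') by (apply (A c); auto). subst; auto.
  - intros [c [C [u [w [D [F K]]]]]]. destruct (T1 c C) as [u' D'].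
    exists c; split; auto. exists u', w. assert (u' = u) by (apply (A c); auto). subst; auto.
Qed.

Lemma Step_ex f d : (forall c, c ∈ d -> exists u, App E f c u) ->
  (forall c u u', App E f c u -> App E f c u' -> u = u') -> exists v, Step E rho f d v.
Proof.
  intros T U.
  destruct (replU (fun M E x y r => exists u, App E (r 0) x u /\ G M E x u y (fun n => r (S n)))
    ltac:(ud) M E HZ (scons f rho) d) as [B HB].
  { intros x Hx. destruct (T x Hx) as [u Hu]. destruct (Gtot x u) as [w Hw].
    exists w; split; [exists u; split; auto|]. simpl.
    intros y [u' [H1 H2]]. rewrite (U x u' u H1 Hu) in H2. eapply Guniq; eauto. }
  destruct (uni_ex M E HZ B) as [V HV].
  destruct (sepU (fun M E z r => exists c, E c (r 0) /\ exists u w, App E (r 1) c u /\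
       G M E c u w (fun n => r (S (S n))) /\ E z w) ltac:(ud) M E HZ (scons d (scons f rho)) V) as [v Hv].
  exists v. intros z. rewrite (Hv z). simpl. split; [tauto|]. intros A; split; auto.
  destruct A as [c [C [u [w [D [F K]]]]]]. apply HV.
  destruct (HB c C) as [w' [W1 [u' [W2 W3]]]]. exists w. split; auto.
  rewrite (U c u u' D W2) in F. rewrite (Guniq c u' w w' F W3); auto.
Qed.

Lemma L_agree f f' g g' : RecFun E rho f g -> RecFun E rho f' g' ->
  forall d v v', d ∈ g -> d ∈ g' -> App E f d v -> App E f' d v' -> v = v'.
Proof.
  intros [O1 [T1 [U1 S1]]] [O2 [T2 [U2 S2]]] d v v' D1 D2 A1 A2.
  apply NNPP; intros N.
  destruct (sepU (fun M E x r => E x (r 0) /\ exists v v', App E (r 1) x v /\ App E (r 2) x v' /\ v <> v')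
    ltac:(ud) M E HZ (scons g' (scons f (scons f' rho))) g) as [D HD]. simpl in HD.
  destruct (found_min M E HZ D) as [m [Hm1 Hm2]]. { exists d. apply HD; split; auto. split; auto. exists v, v'; auto. }
  apply HD in Hm1 as [Hm1 [Hm3 [x [x' [X1 [X2 X3]]]]]]. apply X3.
  apply (Step_eq f f' m); auto.
  - intros c u u' C A B. apply NNPP; intros N'. apply (Hm2 c C). apply HD.
    split; [eapply ord_trans; eauto|]. split; [eapply ord_trans; eauto|]. exists u, u'; auto.
  - intros c C; apply T1; eapply ord_trans; eauto.
  - intros c C; apply T2; eapply ord_trans; eauto.
Qed.

Lemma FR_app f g d u : RecFun E rho f g -> d ∈ g -> (App E f d u <-> FR E rho d u).
Proof.
  intros R D. split.
  - intros A. exists f, g. split; auto. split.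
    + intros z Z. destruct R as [O _]. eapply ord_trans; eauto.
    + destruct R as [_ [_ [_ S]]]; auto.
  - intros [h [g2 [R2 [Sb St]]]].
    pose proof R as R'. destruct R' as [O [T [U S]]].
    destruct (T d D) as [u' A]. assert (u' = u); [|subst; auto].
    apply (Step_eq f h d); auto.
    + intros c x x' C X X'. apply (L_agree f h g g2 R R2 c x x'); auto. eapply ord_trans; eauto.
    + intros c C. apply T. eapply ord_trans; eauto.
    + intros c C. destruct R2 as [_ [T2 _]]. apply T2; auto.
Qed.

Lemma FR_unique d v v' : FR E rho d v -> FR E rho d v' -> v = v'.
Proof.
  intros [f [g [R [Sb St]]]] [f' [g' [R' [Sb' St']]]].
  apply (Step_eq f f' d); auto.
  - intros c x x' C X X'. eapply (L_agree f f' g g'); eauto.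
  - intros c C. destruct R as [_ [T _]]. auto.
  - intros c C. destruct R' as [_ [T _]]. auto.
Qed.

Lemma L_exist g : Ord E g -> exists f, RecFun E rho f g.
Proof.
  intros Og.
  apply (ord_ind M E HZ (fun M E x r => exists f, RecFun E r f x) ltac:(ud) rho); auto.
  clear g Og. intros g Og IH.
  assert (Hv : forall d, d ∈ g -> exists v, FR E rho d v).
  { intros d D. destruct (IH d D) as [f R]. pose proof R as R'. destruct R' as [O [T [U S]]].
    destruct (Step_ex f d T U) as [v Hv]. exists v, f, d. split; auto. split; auto. intros z Z; auto. }
  destruct (replU (fun M E x p r => exists v, FR E r x v /\ OP E p x v) ltac:(ud) M E HZ rho g) as [B HB].
  { intros x Hx. destruct (Hv x Hx) as [v V]. destruct (op_ex M E HZ x v) as [p P].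
    exists p; split; [exists v; auto|]. intros p' [v' [V' P']].
    rewrite (FR_unique x v' v V' V) in P'. apply (ext M E HZ). intros z; rewrite (P z), (P' z); tauto. }
  destruct (sepU (fun M E p r => exists d, E d (r 0) /\ exists v, FR E (fun n => r (S n)) d v /\ OP E p d v)
    ltac:(ud) M E HZ (scons g rho) B) as [f Hf]. simpl in Hf.
  assert (AF : forall a v, App E f a v <-> a ∈ g /\ FR E rho a v).
  { intros a v; split.
    - intros [p [P1 P2]]. apply Hf in P1 as [_ [d [D [v' [V' P']]]]].
      destruct (op_inj M E HZ p a v d v' P2 P') as [-> ->]. auto.
    - intros [A V]. destruct (HB a A) as [p [P1 [v' [V' P']]]].
      rewrite (FR_unique a v' v V' V) in P'. exists p; split; auto.
      apply Hf; split; auto. exists a; split; auto. exists v; auto. }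
  exists f. split; auto. split; [|split].
  - intros a A. destruct (Hv a A) as [v V]. exists v; apply AF; auto.
  - intros a v v' A A'. apply AF in A, A'. eapply FR_unique; apply A || apply A'.
  - intros a v A. apply AF in A as [A [h [g2 [R2 [Sb St]]]]].
    apply (Step_transfer h); auto. intros c u C.
    rewrite (FR_app h g2 c u R2 (Sb c C)). rewrite AF. split; [|tauto].
    intros; split; auto. eapply ord_trans; eauto.
Qed.

Lemma FR_exists g : Ord E g -> exists v, FR E rho g v.
Proof.
  intros Og. destruct (L_exist g Og) as [f R]. pose proof R as R'. destruct R' as [O [T [U S]]].
  destruct (Step_ex f g T U) as [v Hv]. exists v, f, g. split; auto. split; auto. intros z Z; auto.
Qed.

Lemma FR_eqn g v : FR E rho g v ->
  forall z, z ∈ v <-> exists c, c ∈ g /\ exists u w, FR E rho c u /\ G M E c u w rho /\ z ∈ w.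
Proof.
  intros [f [g' [R [Sb St]]]] z. rewrite (St z).
  split; intros [c [C [u [w [A [B K]]]]]]; exists c; split; auto; exists u, w; split; auto;
  eapply FR_app; eauto.
Qed.

End Model.
End Rec.

Definition Nat {M} (E : M -> M -> Prop) n :=
  Ord E n /\ forall m, (E m n \/ m = n) -> Emp E m \/ exists j, Succ E m j.
Lemma UD_Nat i : UD (fun M E r => Nat E (r i)). Proof. unfold Nat; ud. Qed.
#[export] Hint Resolve UD_Nat : ud.

Definition GTC (M : Type) (E : M -> M -> Prop) (d u w : M) (rho : nat -> M) :=
  forall z, E z w <-> E z (rho 0) \/ exists y, E z y /\ E y u.
Lemma UD_GTC : UD (fun M E r => GTC M E (r 0) (r 1) (r 2) (fun n => r (S (S (S n))))).
Proof. unfold GTC; ud. Qed.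

Section Model.
Variable M : Type.
Variable E : M -> M -> Prop.
Hypothesis HZ : ZF_model M E.
Local Notation "x ∈ y" := (E x y) (at level 70).

Lemma nat_elem n m : Nat E n -> m ∈ n -> Nat E m.
Proof.
  intros [On Hn] A. split. { eapply ord_elem; eauto. }
  intros k [K| ->]; apply Hn; auto. left; eapply ord_trans; eauto.
Qed.

Lemma omega_ex : exists w, Ord E w /\ (exists e, Emp E e /\ e ∈ w) /\
  forall n s, n ∈ w -> Succ E s n -> s ∈ w.
Proof.
  destruct (zf_inf M E HZ) as [w [[e [ew He]] Hw]].
  assert (Hs : forall n s, n ∈ w -> Succ E s n -> s ∈ w).
  { intros n s N S. destruct (Hw n N) as [s' [S1 S2]]. replace s with s'; auto.
    apply (ext M E HZ); intros z; rewrite (S z); apply S2. }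
  assert (NW : forall n, Nat E n -> n ∈ w).
  { intros n Nn. apply NNPP; intros N.
    destruct (succ_ex M E HZ n) as [s Hsn]. assert (Os : Ord E s) by (eapply ord_succ; eauto; apply Nn).
    destruct (sepU (fun M E x r => ~ E x (r 0)) ltac:(ud) M E HZ (fun _ => w) s) as [D HD]. simpl in HD.
    destruct (found_min M E HZ D) as [m [Hm1 Hm2]]. { exists n; apply HD; split; auto. apply Hsn; auto. }
    apply HD in Hm1 as [Hm1 Hm3]. apply Hm3.
    destruct Nn as [On Hn]. destruct (Hn m) as [Em|[j Sj]]. { apply Hsn; auto. }
    - replace m with e; auto. eapply emp_uniq; eauto.
    - apply (Hs j); auto. apply NNPP; intros Nj. apply (Hm2 j). { apply Sj; auto. }
      apply HD; split; auto. eapply ord_trans; eauto. apply Sj; auto. }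
  destruct (sepU (fun M E x r => Nat E x) ltac:(ud) M E HZ (fun _ => w) w) as [om Hom]. simpl in Hom.
  exists om. split; [|split].
  - apply ord_of_trans; auto.
    + intros y z A B. apply Hom in B as [B1 B2]. assert (Nat E z) by (eapply nat_elem; eauto).
      apply Hom; auto.
    + intros y A. apply Hom in A. apply A.
  - exists e; split; auto. apply Hom; split; auto. split. { apply ord_emp; auto. }
    intros m [A| ->]; auto. destruct (He m A).
  - intros n s A S. apply Hom in A as [A1 [A2 A3]]. apply Hom; split; [eapply Hs; eauto|].
    split. { eapply ord_succ; eauto. }
    intros m [B| ->]. { apply S in B as [B| ->]; apply A3; auto. }
    right; exists n; auto.
Qed.

Lemma tc_ex x : exists T, Trans E T /\ Sub E x T.
Proof.
  destruct omega_ex as [w [Ow [[e [He ew]] Hw]]].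
  set (rho := fun _ : nat => x).
  assert (Gtot : forall d u, exists w, GTC M E d u w rho).
  { intros d u. destruct (uni_ex M E HZ u) as [v Hv]. destruct (bunion_ex M E HZ x v) as [c Hc].
    exists c. intros z. rewrite (Hc z), (Hv z). unfold rho; tauto. }
  assert (Guniq : forall d u w w', GTC M E d u w rho -> GTC M E d u w' rho -> w = w').
  { intros d u a b A B. apply (ext M E HZ); intros z; rewrite (A z), (B z); tauto. }
  destruct (FR_exists GTC UD_GTC M E HZ rho Gtot Guniq w Ow) as [T HT].
  pose proof (FR_eqn GTC M E HZ rho w T HT) as EQ.
  exists T. split.
  - intros y z A B. apply EQ in B as [n [N [u [v [U [G K]]]]]].
    destruct (succ_ex M E HZ n) as [s Hs]. assert (sw : s ∈ w) by eauto.
    assert (On : Ord E n) by (eapply ord_elem; eauto).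
    assert (Os : Ord E s) by (eapply ord_succ; eauto).
    destruct (FR_exists GTC UD_GTC M E HZ rho Gtot Guniq s Os) as [us Us].
    destruct (Gtot s us) as [ws Ws].
    apply EQ. exists s; split; auto. exists us, ws; split; auto; split; auto.
    apply Ws. right. exists y; split; auto.
    apply (FR_eqn GTC M E HZ rho s us Us). exists n; split. { apply Hs; auto. }
    exists u, v; auto.
  - intros z Z. destruct (FR_exists GTC UD_GTC M E HZ rho Gtot Guniq e (ord_emp M E e He)) as [u U].
    destruct (Gtot e u) as [v V]. apply EQ. exists e; split; auto. exists u, v; split; auto; split; auto.
    apply V; left; auto.
Qed.

Lemma eps_ind (P : forall M : Type, (M -> M -> Prop) -> M -> (nat -> M) -> Prop) :
  UD (fun M E r => P M E (r 0) (fun n => r (S n))) -> forall rho,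
  (forall x, (forall y, y ∈ x -> P M E y rho) -> P M E x rho) -> forall x, P M E x rho.
Proof.
  intros HP rho IH x. apply NNPP; intros N.
  destruct (sing_ex M E HZ x) as [s Hs]. destruct (tc_ex s) as [T [TT ST]].
  destruct (sepU (fun M E x r => ~ P M E x r) ltac:(ud) M E HZ rho T) as [D HD].
  destruct (found_min M E HZ D) as [m [Hm1 Hm2]]. { exists x; apply HD; split; auto. apply ST, Hs; auto. }
  apply HD in Hm1 as [Hm1 Hm3]. apply Hm3, IH. intros y Y. apply NNPP; intros Ny.
  apply (Hm2 y Y). apply HD; split; auto. eapply TT; eauto.
Qed.

End Model.

Definition GV (M : Type) (E : M -> M -> Prop) (d u w : M) (rho : nat -> M) :=
  forall z, E z w <-> Sub E z u.
Lemma UD_GV : UD (fun M E r => GV M E (r 0) (r 1) (r 2) (fun n => r (S (S (S n))))).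
Proof. unfold GV; ud. Qed.

Definition Key {M} (E : M -> M -> Prop) x g :=
  Ord E g /\ (exists v, FR GV E (fun _ => x) g v /\ E x v) /\
  forall d, E d g -> forall v, FR GV E (fun _ => x) d v -> ~ E x v.
Lemma UD_VV s i j : UD (fun M E r => FR GV E (fun n => r (s n)) (r i) (r j)).
Proof. exact (UD_FR GV UD_GV s i j). Qed.
#[export] Hint Resolve UD_VV : ud.
Lemma UD_Key i j : UD (fun M E r => Key E (r i) (r j)).
Proof. unfold Key; ud. Qed.
#[export] Hint Resolve UD_Key : ud.

Section Model.
Variable M : Type.
Variable E : M -> M -> Prop.
Hypothesis HZ : ZF_model M E.
Local Notation "x ∈ y" := (E x y) (at level 70).

Lemma GV_tot rho : forall d u, exists w, GV M E d u w rho.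
Proof. intros d u. destruct (pow_ex M E HZ u) as [p Hp]. exists p; exact Hp. Qed.
Lemma GV_uniq rho : forall d u w w', GV M E d u w rho -> GV M E d u w' rho -> w = w'.
Proof. intros d u a b A B. apply (ext M E HZ); intros z; rewrite (A z), (B z); tauto. Qed.

Lemma V_ex rho g : Ord E g -> exists v, FR GV E rho g v.
Proof. intros. apply (FR_exists GV UD_GV M E HZ rho (GV_tot rho) (GV_uniq rho)); auto. Qed.
Lemma V_uniq rho rho' g v v' : FR GV E rho g v -> FR GV E rho' g v' -> v = v'.
Proof. intros A B. apply (FR_unique GV M E HZ rho g v v' A B). Qed.
Lemma V_eqn rho g v : FR GV E rho g v -> forall z, z ∈ v <-> exists c, c ∈ g /\ exists u, FR GV E rho c u /\ Sub E z u.
Proof.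
  intros A z. rewrite (FR_eqn GV M E HZ rho g v A z). split.
  - intros [c [C [u [w [U [W K]]]]]]. exists c; split; auto. exists u; split; auto. apply W; auto.
  - intros [c [C [u [U S]]]]. destruct (GV_tot rho c u) as [w W]. exists c; split; auto. exists u, w.
    split; auto; split; auto. apply W; auto.
Qed.

Lemma V_mono rho d g u v : Ord E g -> d ∈ g -> FR GV E rho d u -> FR GV E rho g v -> Sub E u v.
Proof.
  intros Og D U V z Z. apply (V_eqn rho g v V). apply (V_eqn rho d u U) in Z as [c [C [u' [U' S]]]].
  exists c; split; [eapply ord_trans; eauto|]. exists u'; auto.
Qed.

Lemma key_ex x : exists g, Key E x g.
Proof.
  assert (Lev : forall x, exists g v, Ord E g /\ FR GV E (fun _ => x) g v /\ x ∈ v).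
  { apply (eps_ind M E HZ (fun M E x r => exists g v, Ord E g /\ FR GV E r g v /\ E x v) ltac:(ud)
      (fun _ => x)).
    intros y IH.
    assert (LL : forall z, z ∈ y -> exists k, Key E z k).
    { intros z Z. destruct (IH z Z) as [g [v [Og [Vg Zv]]]].
      destruct (ord_min M E HZ (fun M E g r => exists v, FR GV E r g v /\ E (r 0) v) ltac:(ud)
        (fun _ => z) g Og) as [m [Om [Pm Hm]]].
      { exists v; split; auto. }
      exists m. split; auto. split; auto. intros d D w W Zw. apply (Hm d D). exists w; auto. }
    assert (KU : forall z k k', Key E z k -> Key E z k' -> k = k').
    { intros z k k' [O1 [[v1 [V1 Z1]] M1]] [O2 [[v2 [V2 Z2]] M2]].
      destruct (ord_tri M E HZ k k' O1 O2) as [A|[A|A]]; auto.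
      - destruct (M2 k A v1 V1 Z1).
      - destruct (M1 k' A v2 V2 Z2). }
    destruct (replU (fun M E z s r => exists k, Key E z k /\ Succ E s k) ltac:(ud) M E HZ (fun _ => x) y) as [B HB].
    { intros z Z. destruct (LL z Z) as [k K]. destruct (succ_ex M E HZ k) as [s S].
      exists s; split; [exists k; auto|]. intros s' [k' [K' S']]. rewrite (KU z k' k K' K) in S'.
      apply (ext M E HZ); intros t; rewrite (S t), (S' t); tauto. }
    destruct (sepU (fun M E s r => exists z, E z (r 0) /\ exists k, Key E z k /\ Succ E s k) ltac:(ud)
      M E HZ (fun _ => y) B) as [B' HB']. simpl in HB'.
    destruct (uni_ex M E HZ B') as [th Hth].
    assert (Oth : Ord E th).
    { apply (ord_uni M E HZ B'); auto. intros s S. apply HB' in S as [_ [z [Z [k [[Ok _] Sk]]]]].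
      eapply ord_succ; eauto. }
    destruct (succ_ex M E HZ th) as [s Hs]. assert (Os : Ord E s) by (eapply ord_succ; eauto).
    destruct (V_ex (fun _ => x) s Os) as [v Vs]. destruct (V_ex (fun _ => x) th Oth) as [u Vth].
    exists s, v. split; auto. split; auto. apply (V_eqn _ s v Vs).
    exists th; split; [apply Hs; auto|]. exists u; split; auto.
    intros z Z. destruct (HB z Z) as [t [T [k [K Sk]]]].
    assert (kth : k ∈ th).
    { apply Hth. exists t; split; [apply Sk; auto|]. apply HB'; split; auto. exists z; split; auto. exists k; auto. }
    destruct K as [Ok [[w [Vw Zw]] _]].
    apply (V_mono (fun _ => x) k th w u Oth kth); auto. }
  destruct (Lev x) as [g [v [Og [Vg Xv]]]].
  destruct (ord_min M E HZ (fun M E g r => exists v, FR GV E r g v /\ E (r 0) v) ltac:(ud)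
        (fun _ => x) g Og) as [m [Om [Pm Hm]]].
  { exists v; split; auto. }
  exists m. split; auto. split; auto. intros d D w W Zw. apply (Hm d D). exists w; auto.
Qed.

Lemma key_uniq z k k' : Key E z k -> Key E z k' -> k = k'.
Proof.
  intros [O1 [[v1 [V1 Z1]] M1]] [O2 [[v2 [V2 Z2]] M2]].
  destruct (ord_tri M E HZ k k' O1 O2) as [A|[A|A]]; auto.
  - destruct (M2 k A v1 V1 Z1).
  - destruct (M1 k' A v2 V2 Z2).
Qed.

End Model.

Section Phi.
Variable phi : form.

Lemma UD_phi i s : UD (fun M E r => sat E (scons (r i) (fun n => r (s n))) phi).
Proof. exists (ren (scons i s) phi); intros M E r. rewrite sat_ren. apply sat_ext. intros [|n]; reflexivity. Qed.
#[local] Hint Resolve UD_phi : ud.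

Definition InR {M} (E : M -> M -> Prop) (rho : nat -> M) d :=
  exists x, sat E (scons x rho) phi /\ Key E x d.
Lemma UD_InR s i : UD (fun M E r => InR E (fun n => r (s n)) (r i)).
Proof. unfold InR; ud. Qed.
#[local] Hint Resolve UD_InR : ud.

Definition Gh (M : Type) (E : M -> M -> Prop) (d u w : M) (rho : nat -> M) :=
  (InR E rho d /\ Succ E w u) \/ (~ InR E rho d /\ Emp E w).
Lemma UD_Gh : UD (fun M E r => Gh M E (r 0) (r 1) (r 2) (fun n => r (S (S (S n))))).
Proof. unfold Gh; ud. Qed.
Lemma UD_hrel s i j : UD (fun M E r => FR Gh E (fun n => r (s n)) (r i) (r j)).
Proof. exact (UD_FR Gh UD_Gh s i j). Qed.
#[local] Hint Resolve UD_hrel : ud.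

Definition Psi (M : Type) (E : M -> M -> Prop) (r : nat -> M) : Prop :=
  sat E (scons (r 1) (fun n => r (S (S (S n))))) phi /\
  exists k v, Key E (r 1) k /\ FR Gh E (fun n => r (S (S (S n)))) k v /\
   ((E v (r 2) /\ r 0 = v) \/ (~ E v (r 2) /\ Emp E (r 0))).
Lemma UD_Psi : UD Psi.
Proof. unfold Psi; ud. Qed.

Section Model.
Variable M : Type.
Variable E : M -> M -> Prop.
Hypothesis HZ : ZF_model M E.
Variable rho : nat -> M.
Hypothesis Hprop : proper_class E phi rho.
Local Notation "x ∈ y" := (E x y) (at level 70).

Lemma Gh_tot : forall d u, exists w, Gh M E d u w rho.
Proof.
  intros d u. destruct (classic (InR E rho d)) as [I|I].
  - destruct (succ_ex M E HZ u) as [s S]. exists s; left; auto.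
  - destruct (emp_ex M E HZ) as [e He]. exists e; right; auto.
Qed.
Lemma Gh_uniq : forall d u w w', Gh M E d u w rho -> Gh M E d u w' rho -> w = w'.
Proof.
  intros d u w w' [[I S]|[I S]] [[I' S']|[I' S']]; try tauto.
  - apply (ext M E HZ); intros z; rewrite (S z), (S' z); tauto.
  - eapply emp_uniq; eauto.
Qed.

Lemma h_ex g : Ord E g -> exists v, FR Gh E rho g v.
Proof. apply (FR_exists Gh UD_Gh M E HZ rho Gh_tot Gh_uniq). Qed.
Lemma h_uniq g v v' : FR Gh E rho g v -> FR Gh E rho g v' -> v = v'.
Proof. apply FR_unique; auto. Qed.
Lemma h_eqn g v : FR Gh E rho g v -> forall z, z ∈ v <-> exists c, c ∈ g /\ exists u w,
   FR Gh E rho c u /\ Gh M E c u w rho /\ z ∈ w.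
Proof. apply FR_eqn; auto. Qed.

Lemma h_ord g : Ord E g -> forall v, FR Gh E rho g v -> Ord E v.
Proof.
  apply (ord_ind M E HZ (fun M E g r => forall v, FR Gh E r g v -> Ord E v) ltac:(ud) rho).
  clear g. intros g Og IH v Hv. apply (ord_of_trans M E HZ).
  - intros y z A B. apply (h_eqn g v Hv) in B as [c [C [u [w [U [W K]]]]]].
    apply (h_eqn g v Hv). exists c; split; auto. exists u, w; split; auto; split; auto.
    destruct W as [[_ S]|[_ S]]; [|destruct (S y K)].
    assert (Ou : Ord E u) by (eapply IH; eauto). assert (Ow : Ord E w) by (eapply ord_succ; eauto).
    eapply ord_trans; eauto.
  - intros y A. apply (h_eqn g v Hv) in A as [c [C [u [w [U [W K]]]]]].
    destruct W as [[_ S]|[_ S]]; [|destruct (S y K)].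
    assert (Ou : Ord E u) by (eapply IH; eauto). assert (Ow : Ord E w) by (eapply ord_succ; eauto).
    eapply ord_elem; eauto.
Qed.

Lemma InR_ord d : InR E rho d -> Ord E d.
Proof. intros [x [_ [O _]]]; auto. Qed.

Lemma h_lt c g u v : c ∈ g -> InR E rho c -> FR Gh E rho c u -> FR Gh E rho g v -> u ∈ v.
Proof.
  intros C I U V. apply (h_eqn g v V). exists c; split; auto.
  destruct (succ_ex M E HZ u) as [s S]. exists u, s; split; auto; split; [left; auto|]. apply S; auto.
Qed.

Lemma h_inj c c' u : InR E rho c -> InR E rho c' -> FR Gh E rho c u -> FR Gh E rho c' u -> c = c'.
Proof.
  intros I I' U U'. destruct (ord_tri M E HZ c c' (InR_ord c I) (InR_ord c' I')) as [A|[A|A]]; auto.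
  - destruct (no_self M E HZ u). eapply h_lt; eauto.
  - destruct (no_self M E HZ u). eapply h_lt; eauto.
Qed.

Lemma h_unbounded b : Ord E b -> exists c u, InR E rho c /\ FR Gh E rho c u /\ ~ u ∈ b.
Proof.
  intros Ob. apply NNPP; intros N.
  assert (AL : forall c u, InR E rho c -> FR Gh E rho c u -> u ∈ b).
  { intros c u I U. apply NNPP; intros N'. apply N; exists c, u; auto. }
  destruct (replU (fun M E x y r => (exists c, InR E r c /\ FR Gh E r c x /\ y = c) \/
      (~ (exists c, InR E r c /\ FR Gh E r c x) /\ Emp E y)) ltac:(ud) M E HZ rho b) as [B HB].
  { intros x X. destruct (classic (exists c, InR E rho c /\ FR Gh E rho c x)) as [[c [I U]]|N'].
    - exists c; split; [left; eauto|]. intros y [[c' [I' [U' ->]]]|[N' _]].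
      + eapply h_inj; eauto.
      + destruct N'; eauto.
    - destruct (emp_ex M E HZ) as [e He]. exists e; split; [right; auto|].
      intros y [[c' [I' [U' ->]]]|[_ Y]]. + destruct N'; eauto. + eapply emp_uniq; eauto. }
  destruct (replU (fun M E x y r => (Ord E x /\ FR GV E r x y) \/ (~ Ord E x /\ Emp E y)) ltac:(ud)
     M E HZ rho B) as [B2 HB2].
  { intros x X. destruct (classic (Ord E x)) as [O|O].
    - destruct (V_ex M E HZ rho x O) as [v Vv]. exists v; split; [left; auto|].
      intros y [[_ Y]|[Y _]]; [eapply V_uniq; eauto| tauto].
    - destruct (emp_ex M E HZ) as [e He]. exists e; split; [right; auto|].
      intros y [[Y _]|[_ Y]]; [tauto| eapply emp_uniq; eauto]. }
  destruct (uni_ex M E HZ B2) as [U HU].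
  destruct (sepU (fun M E x r => sat E (scons x r) phi) ltac:(ud) M E HZ rho U) as [Cs HC].
  apply Hprop. exists Cs. intros x. rewrite (HC x). split; [tauto|]. intros Cx; split; auto.
  destruct (key_ex M E HZ x) as [k Kk].
  assert (Ik : InR E rho k) by (exists x; auto).
  destruct (h_ex k (InR_ord k Ik)) as [u Uk].
  destruct (HB u (AL k u Ik Uk)) as [y [Y [[c [Ic [Uc ->]]]|[N' _]]]]; [|destruct N'; eauto].
  rewrite <- (h_inj k c u Ik Ic Uk Uc) in Y.
  destruct (HB2 k Y) as [v [Vb [[_ Vk]|[NO _]]]]; [|destruct NO; apply (InR_ord k Ik)].
  apply HU. exists v; split; auto.
  destruct Kk as [_ [[w [Vw Xw]] _]]. rewrite (V_uniq M E HZ rho (fun _ => x) k v w Vk Vw). auto.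
Qed.

Lemma h_onto b : Ord E b -> exists c, InR E rho c /\ FR Gh E rho c b.
Proof.
  intros Ob. destruct (h_unbounded b Ob) as [c0 [v0 [I0 [V0 N0]]]].
  assert (Ov0 : Ord E v0) by exact (h_ord c0 (InR_ord c0 I0) v0 V0).
  destruct (ord_min M E HZ (fun M E g r => InR E (fun n => r (S n)) g /\ exists v, FR Gh E (fun n => r (S n)) g v /\
      (E (r 0) v \/ r 0 = v)) ltac:(ud) (scons b rho) c0 (InR_ord c0 I0)) as [m [Om [[Im [v [Vm Hv]]] Hmin]]].
  { split; auto. exists v0; split; auto. simpl. destruct (ord_tri M E HZ b v0 Ob Ov0) as [A|[A|A]]; tauto. }
  simpl in Hv. exists m; split; auto.
  assert (Ov : Ord E v) by (eapply h_ord; eauto).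
  assert (Sb : Sub E v b).
  { intros z Z. apply (h_eqn m v Vm) in Z as [c [C [u [w [U [W K]]]]]].
    destruct W as [[Ic S]|[_ S]]; [|destruct (S z K)].
    assert (Oc : Ord E c) by exact (ord_elem M E HZ m c Om C).
    assert (Ou : Ord E u) by (eapply h_ord; eauto).
    assert (ub : u ∈ b).
    { destruct (ord_tri M E HZ u b Ou Ob) as [A|[A|A]]; auto; exfalso; apply (Hmin c C); simpl;
      split; auto; exists u; split; auto; first [left; assumption | right; congruence]. }
    apply S in K as [K| ->]; auto. eapply ord_trans; eauto. }
  apply (ord_sub_iff M E HZ v b Ov Ob) in Sb as [A| ->]; auto.
  destruct Hv as [B| ->].
  - destruct (no_2cycle M E HZ v b A B).
  - destruct (no_self M E HZ _ A).
Qed.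

Lemma main_model alpha : Ord E alpha -> (exists z, z ∈ alpha) ->
  let C x := sat E (scons x rho) phi in
  let F x y := Psi M E (scons y (scons x (scons alpha rho))) in
  (forall x y, F x y -> C x /\ y ∈ alpha) /\
  (forall x, C x -> exists y, F x y) /\
  (forall x y y', F x y -> F x y' -> y = y') /\
  (forall b, b ∈ alpha -> exists x, C x /\ F x b).
Proof.
  intros Oa Ne C F.
  assert (E0 : exists e, Emp E e /\ e ∈ alpha).
  { destruct (found_min M E HZ alpha Ne) as [m [Hm1 Hm2]]. exists m; split; auto.
    intros z Z. apply (Hm2 z Z). eapply ord_trans; eauto. }
  unfold C, F, Psi; simpl. split; [|split; [|split]].
  - intros x y [Cx [k [v [K [H [[A ->]|[A B]]]]]]]; split; auto.
    destruct E0 as [e [Ee ea]]. rewrite (emp_uniq M E HZ y e B Ee). auto.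
  - intros x Cx. destruct (key_ex M E HZ x) as [k K].
    destruct (h_ex k (proj1 K)) as [v V].
    destruct (classic (v ∈ alpha)) as [A|A].
    + exists v. split; auto. exists k, v; auto.
    + destruct (emp_ex M E HZ) as [e Ee]. exists e; split; auto. exists k, v; auto.
  - intros x y y' [_ [k [v [K [H D]]]]] [_ [k' [v' [K' [H' D']]]]].
    rewrite <- (key_uniq M E HZ x k k' K K') in H'. rewrite <- (h_uniq k v v' H H') in D'.
    destruct D as [[A ->]|[A B]]; destruct D' as [[A' ->]|[A' B']]; try tauto.
    eapply emp_uniq; eauto.
  - intros b B. assert (Ob : Ord E b) by (eapply ord_elem; eauto).
    destruct (h_onto b Ob) as [c [[x [Cx K]] H]].
    exists x; split; auto. split; auto. exists c, b. split; auto.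
Qed.

End Model.
End Phi.

Theorem proposition7p1 :
  forall phi : form, exists psi : form,
    forall (M : Type) (E : M -> M -> Prop), ZF_model M E ->
    forall (rho : nat -> M) (alpha : M),
      proper_class E phi rho ->
      is_ordinal E alpha ->
      (exists z, E z alpha) ->
      class_surjection E phi psi rho alpha.
Proof.
  intros phi. destruct (UD_Psi phi) as [psi Hpsi]. exists psi.
  intros M E HZ rho alpha Hp Ho Hne.
  destruct (main_model phi M E HZ rho Hp alpha Ho Hne) as [A [B [C D]]].
  unfold class_surjection. split; [|split; [|split]].
  - intros x y F. apply A. apply Hpsi in F. exact F.
  - intros x Cx. destruct (B x Cx) as [y F]. exists y. apply Hpsi. exact F.
  - intros x y y' F F'. apply Hpsi in F, F'. eapply C; eauto.
  - intros b Bb. destruct (D b Bb) as [x [Cx F]]. exists x; split; auto. apply Hpsi; exact F.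
Qed.
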